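(* Let $\lambda>0$, $\gamma\ge0$, $\omega\in[-\pi,\pi]$, and let $\theta\sim\mathrm{GCPC}(\omega,\gamma,\lambda)$, with $\theta$ represented in $(\omega-\pi,\omega+\pi]$. Put $\delta=(\sqrt{\gamma^2+1}-1)/\gamma$ (with $\delta=0$ if $\gamma=0$). For $t\in(\omega-\pi,\omega+\pi)$ define $$\psi(t)=\operatorname{atan2}\bigl(\sin(t-\omega),\ \sqrt{\lambda}\cos(t-\omega)\bigr)\in(-\pi,\pi).$$ Then for all $\omega-\pi<a\le b<\omega+\pi$, $$P(a\le\theta\le b)=\frac{1}{\pi}\left[\arctan\!\left(\frac{1+\delta}{1-\delta}\tan\frac{\psi(b)}{2}\right)-\arctan\!\left(\frac{1+\delta}{1-\delta}\tan\frac{\psi(a)}{2}\right)\right].$$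
   Context: For $\lambda>0$, $\gamma\ge0$ and $\omega\in[-\pi,\pi]$, the distribution $\mathrm{GCPC}(\omega,\gamma,\lambda)$ is the distribution on the circle with density $$f(\theta)=\frac{1}{2\pi\sqrt{\lambda}\,\bigl(b\sqrt{\gamma^2+1}-\gamma\cos\phi\,\sqrt{b}\bigr)},\qquad \phi=\theta-\omega,\quad b=\cos^2\phi+\frac{\sin^2\phi}{\lambda}.$$ The function $\operatorname{atan2}(y,x)\in(-\pi,\pi]$ is the standard two-argument arctangent, i.e. the polar angle of the point $(x,y)\ne(0,0)$. *)

(* Defs.v *)
From Stdlib Require Import Reals.
From Coquelicot Require Import Coquelicot.
Open Scope R_scope.

(* Standard two-argument arctangent, values in (-PI, PI]; atan2 0 0 := 0. *)
Definition atan2 (y x : R) : R :=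
  if Rlt_dec 0 x then atan (y / x)
  else if Rlt_dec x 0 then
    (if Rle_dec 0 y then atan (y / x) + PI else atan (y / x) - PI)
  else if Rlt_dec 0 y then PI / 2
  else if Rlt_dec y 0 then - (PI / 2)
  else 0.

Definition gcpc_density (omega gamma lambda theta : R) : R :=
  let phi := theta - omega in
  let b := (cos phi) ^ 2 + (sin phi) ^ 2 / lambda in
  / (2 * PI * sqrt lambda *
     (b * sqrt (gamma ^ 2 + 1) - gamma * cos phi * sqrt b)).

Definition gcpc_delta (gamma : R) : R :=
  if Req_EM_T gamma 0 then 0 else (sqrt (gamma ^ 2 + 1) - 1) / gamma.

Definition gcpc_psi (omega lambda t : R) : R :=
  atan2 (sin (t - omega)) (sqrt lambda * cos (t - omega)).

(* Main.v *)
Require Import Defs.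
From Stdlib Require Import Reals Lra.
From Coquelicot Require Import Coquelicot.
Open Scope R_scope.

Lemma sqrt_1_u2 (x y : R) : x <> 0 ->
  sqrt (1 + (y/x)²) = sqrt (x*x+y*y) / Rabs x.
Proof.
  intros Hx. apply sqrt_lem_1.
  - unfold Rsqr. assert (0 <= (y/x)*(y/x)) by nra. lra.
  - apply Rmult_le_pos. apply sqrt_pos. left; apply Rinv_0_lt_compat; apply Rabs_pos_lt; auto.
  - assert (Hr: sqrt (x*x+y*y) * sqrt (x*x+y*y) = x*x+y*y) by (apply sqrt_sqrt; nra).
    assert (Ha: Rabs x * Rabs x = x * x) by (rewrite <- Rabs_mult; apply Rabs_pos_eq; nra).
    assert (Rabs x <> 0) by (apply Rabs_no_R0; auto).
    unfold Rsqr. replace (sqrt (x * x + y * y) / Rabs x * (sqrt (x * x + y * y) / Rabs x))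
      with ((sqrt (x * x + y * y) * sqrt (x * x + y * y)) / (Rabs x * Rabs x)) by (field; auto).
    rewrite Hr, Ha. field. auto.
Qed.

Lemma atan2_prop (x y : R) : 0 < sqrt (x*x+y*y) ->
  sin (atan2 y x) = y / sqrt (x*x+y*y) /\ cos (atan2 y x) = x / sqrt (x*x+y*y)
  /\ -PI < atan2 y x <= PI.
Proof.
  intros Hr. set (r := sqrt (x*x+y*y)) in *.
  pose proof PI_RGT_0 as Hpi.
  unfold atan2.
  destruct (Rlt_dec 0 x) as [Hx|Hx].
  { pose proof (atan_bound (y/x)).
    rewrite sin_atan, cos_atan, sqrt_1_u2 by lra. fold r.
    rewrite Rabs_pos_eq by lra. repeat split; try lra; field; lra. }
  destruct (Rlt_dec x 0) as [Hx'|Hx'].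
  { pose proof (atan_bound (y/x)).
    assert (Hs: sin (atan (y/x) - PI) = - sin (atan (y/x))).
    { rewrite sin_minus, sin_PI, cos_PI. ring. }
    assert (Hc: cos (atan (y/x) - PI) = - cos (atan (y/x))).
    { rewrite cos_minus, sin_PI, cos_PI. ring. }
    destruct (Rle_dec 0 y).
    - assert (atan (y/x) <= 0).
      { destruct (Req_dec y 0). subst y. replace (0/x) with 0 by (field; lra). rewrite atan_0; lra.
        rewrite <- atan_0. left. apply atan_increasing.
        assert (0 < y / (-x)) by (apply Rdiv_lt_0_compat; lra).
        replace (y/x) with (- (y/(-x))) by (field; lra). lra. }
      rewrite neg_sin, neg_cos, sin_atan, cos_atan, sqrt_1_u2 by lra. fold r.
      rewrite Rabs_left by lra. repeat split; try lra; field; lra.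
    - assert (0 < atan (y/x)).
      { rewrite <- atan_0. apply atan_increasing.
        replace (y/x) with ((-y)/(-x)) by (field; lra). apply Rdiv_lt_0_compat; lra. }
      rewrite Hs, Hc, sin_atan, cos_atan, sqrt_1_u2 by lra. fold r.
      rewrite Rabs_left by lra. repeat split; try lra; field; lra. }
  assert (x = 0) by lra. subst x.
  destruct (Rlt_dec 0 y).
  { assert (Hry: r = y). { unfold r. apply sqrt_lem_1; nra. }
    rewrite Hry, sin_PI2, cos_PI2. repeat split; try lra; field; lra. }
  destruct (Rlt_dec y 0).
  { assert (Hry: r = -y). { unfold r. apply sqrt_lem_1; nra. }
    rewrite Hry, sin_neg, cos_neg, sin_PI2, cos_PI2. repeat split; try lra; field; lra. }
  exfalso. assert (y = 0) by lra. subst y. unfold r in Hr.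
  replace (0*0+0*0) with 0 in Hr by ring. rewrite sqrt_0 in Hr. lra.
Qed.

Lemma tan_half (x : R) : -PI < x < PI -> tan (x/2) = sin x / (1 + cos x).
Proof.
  intros Hx. assert (Hc: 0 < cos (x/2)) by (apply cos_gt_0; lra).
  replace x with (2*(x/2)) at 2 3 by field.
  rewrite sin_2a, cos_2a_cos. unfold tan. field. split; nra.
Qed.

Definition Gf (w l t : R) : R :=
  sin (t - w) / (sqrt (l * cos (t - w) ^ 2 + sin (t - w) ^ 2) + sqrt l * cos (t - w)).

Lemma basic_pos (l p : R) : 0 < l -> -PI < p < PI ->
  0 < l * cos p ^ 2 + sin p ^ 2 /\
  0 < sqrt (l * cos p ^ 2 + sin p ^ 2) /\
  0 < sqrt (l * cos p ^ 2 + sin p ^ 2) + sqrt l * cos p.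
Proof.
  intros Hl Hp.
  pose proof (sin2_cos2 p) as Hsc. unfold Rsqr in Hsc.
  assert (H1: 0 < l * cos p ^ 2 + sin p ^ 2).
  { destruct (Req_dec (cos p) 0) as [E|E].
    - rewrite E in *. nra.
    - assert (0 < cos p ^ 2) by (simpl; nra). nra. }
  assert (H2: 0 < sqrt (l * cos p ^ 2 + sin p ^ 2)) by (apply sqrt_lt_R0; auto).
  split; auto. split; auto.
  set (r := sqrt (l * cos p ^ 2 + sin p ^ 2)) in *.
  assert (HL: 0 < sqrt l) by (apply sqrt_lt_R0; auto).
  assert (HLL: sqrt l * sqrt l = l) by (apply sqrt_sqrt; lra).
  assert (Hrr: r * r = l * cos p ^ 2 + sin p ^ 2) by (apply sqrt_sqrt; lra).
  destruct (Rle_dec 0 (cos p)).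
  - nra.
  - assert (Hc: 0 < cos (p/2)) by (apply cos_gt_0; lra).
    assert (Hcc: cos p = 2 * cos (p/2) * cos (p/2) - 1).
    { rewrite <- cos_2a_cos. f_equal. field. }
    assert (-1 < cos p) by nra.
    assert (0 < sin p ^ 2) by (simpl; nra).
    assert (r * r > (sqrt l * cos p) * (sqrt l * cos p)).
    { replace ((sqrt l * cos p) * (sqrt l * cos p)) with ((sqrt l * sqrt l) * cos p ^2) by ring.
      rewrite HLL. lra. }
    nra.
Qed.

Lemma derive_G (w l t : R) : 0 < l -> -PI < t - w < PI ->
  is_derive (Gf w l) t
   (sqrt l / (sqrt (l * cos (t - w) ^ 2 + sin (t - w) ^ 2) *
      (sqrt (l * cos (t - w) ^ 2 + sin (t - w) ^ 2) + sqrt l * cos (t - w)))).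
Proof.
  intros Hl Hp. destruct (basic_pos l (t-w) Hl Hp) as [H1 [H2 H3]].
  unfold Gf. auto_derive.
  - change (t + - w) with (t - w).
    replace (l * (cos (t - w) * (cos (t - w) * 1)) + sin (t - w) * (sin (t - w) * 1))
      with (l * cos (t - w) ^ 2 + sin (t - w) ^ 2) by ring.
    split; [lra|split; [lra|auto]].
  - change (t + - w) with (t - w).
    replace (l * (cos (t - w) * (cos (t - w) * 1)) + sin (t - w) * (sin (t - w) * 1))
      with (l * cos (t - w) ^ 2 + sin (t - w) ^ 2) by ring.
    pose proof (sin2_cos2 (t-w)) as Hsc. unfold Rsqr in Hsc.
    assert (HLL: sqrt l * sqrt l = l) by (apply sqrt_sqrt; lra).
    assert (Hrr: sqrt (l * cos (t - w) ^ 2 + sin (t - w) ^ 2) * sqrt (l * cos (t - w) ^ 2 + sin (t - w) ^ 2)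
       = l * cos (t - w) ^ 2 + sin (t - w) ^ 2) by (apply sqrt_sqrt; lra).
    set (r := sqrt (l * cos (t - w) ^ 2 + sin (t - w) ^ 2)) in *.
    set (L := sqrt l) in *. set (c := cos (t - w)) in *. set (s := sin (t - w)) in *.
    clearbody r L c s. subst l.
    transitivity ((c*r*r + L*c*c*r - s*s*c + L*L*s*s*c + L*s*s*r) / (r * (r + L*c) * (r + L*c))).
    { field. lra. }
    replace (c*r*r + L*c*c*r - s*s*c + L*L*s*s*c + L*s*s*r) with (L * (r + L*c)).
    { field. lra. }
    assert (E: c*r*r + L*c*c*r - s*s*c + L*L*s*s*c + L*s*s*r - L * (r + L*c)
        = c * (r*r - (L*L*c^2 + s^2)) + (L*L*c + L*r) * (s*s + c*c - 1)) by ring.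
    rewrite Hrr, Hsc in E. lra.
Qed.
Lemma final_alg c s r L q g k : 0 < L -> 0 < r -> 0 < r + L*c -> q*q = g*g+1 ->
  r*r = L*L*c^2 + s^2 -> k = q + g -> 0 <= g -> 0 < q ->
  / PI * (/ (1 + (k * (s / (r + L*c)))^2) * (k * (L / (r * (r + L*c)))))
  = / (2 * PI * L * ((r/L)*(r/L)*q - g*c*(r/L))).
Proof.
  intros HL Hr Hrc Hq Hrr Hk Hg Hq0.
  pose proof PI_RGT_0.
  assert (Hk0: 0 < k) by lra.
  assert (Hqg: g < q) by nra.
  assert (HLc: L*c <= r) by nra.
  assert (Hpos: 0 < r*q - g*L*c) by nra.
  assert (Key: 2*k*(r+L*c)*(r*q-g*L*c) = (r+L*c)^2 + k^2*s^2).
  { assert (E: 2*k*(r+L*c)*(r*q-g*L*c) - ((r+L*c)^2 + k^2*s^2)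
        = (q*q-g*g-1)*(r+L*c)^2 + k^2*(r*r-(L*L*c^2+s^2))) by (subst k; ring).
    rewrite Hq, Hrr in E. lra. }
  assert (HD: 0 < (r+L*c)^2 + k^2*s^2) by nra.
  transitivity (/PI * (k * L * (r + L*c) / (r * ((r+L*c)^2 + k^2*s^2)))).
  { field. repeat split; try lra. }
  rewrite <- Key. field. repeat split; try lra. nra.
Qed.

Lemma k_eq g : 0 <= g -> (1 + gcpc_delta g) / (1 - gcpc_delta g) = sqrt (g^2+1) + g.
Proof.
  intros Hg. unfold gcpc_delta.
  assert (Hq: sqrt (g^2+1) * sqrt (g^2+1) = g^2+1) by (apply sqrt_sqrt; nra).
  assert (Hq0: 0 < sqrt (g^2+1)) by (apply sqrt_lt_R0; nra).
  destruct (Req_EM_T g 0) as [E|E].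
  - subst g. replace (0^2+1) with 1 by ring. rewrite sqrt_1. field.
  - assert (Hlt: sqrt (g^2+1) < g + 1) by nra.
    set (q := sqrt (g^2+1)) in *.
    replace ((1 + (q - 1) / g) / (1 - (q - 1) / g)) with ((g + q - 1)/(g - q + 1)) by (field; lra).
    apply (Rmult_eq_reg_r (g - q + 1)); [|lra].
    field_simplify; [|lra]. nra.
Qed.

Lemma psi_eq w l t : 0 < l -> -PI < t - w < PI ->
  tan (gcpc_psi w l t / 2) = Gf w l t.
Proof.
  intros Hl Hp. destruct (basic_pos l (t-w) Hl Hp) as [H1 [H2 H3]].
  unfold gcpc_psi, Gf.
  assert (HLL: sqrt l * sqrt l = l) by (apply sqrt_sqrt; lra).
  assert (Er: sqrt (sqrt l * cos (t - w) * (sqrt l * cos (t - w)) + sin (t - w) * sin (t - w))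
     = sqrt (l * cos (t - w) ^ 2 + sin (t - w) ^ 2)).
  { f_equal. rewrite <- HLL at 3. ring. }
  destruct (atan2_prop (sqrt l * cos (t - w)) (sin (t - w))) as [Hs [Hc Hb]].
  { rewrite Er. auto. }
  rewrite Er in Hs, Hc.
  set (r := sqrt (l * cos (t - w) ^ 2 + sin (t - w) ^ 2)) in *.
  set (psi := atan2 (sin (t - w)) (sqrt l * cos (t - w))) in *.
  assert (Hpi: psi <> PI).
  { intro E. rewrite E, cos_PI in Hc.
    assert (sqrt l * cos (t - w) = -1 * r) by (rewrite Hc; field; lra). lra. }
  rewrite tan_half by lra. rewrite Hs, Hc. field. lra.
Qed.

Lemma scal_R : forall a b : R, scal a b = a * b.
Proof. reflexivity. Qed.

Lemma derive_F w g l t : 0 < l -> 0 <= g -> -PI < t - w < PI ->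
  is_derive (fun t => / PI * atan ((sqrt (g^2+1) + g) * Gf w l t)) t
    (gcpc_density w g l t).
Proof.
  intros Hl Hg Hp.
  set (k := sqrt (g^2+1) + g).
  pose proof (derive_G w l t Hl Hp) as HG.
  assert (Hat: is_derive atan (k * Gf w l t) (/ (1 + (k * Gf w l t)^2))).
  { apply is_derive_Reals. apply derivable_pt_lim_atan. }
  assert (HkG: is_derive (fun t => k * Gf w l t) t (k * (sqrt l / (sqrt (l * cos (t - w) ^ 2 + sin (t - w) ^ 2) *
      (sqrt (l * cos (t - w) ^ 2 + sin (t - w) ^ 2) + sqrt l * cos (t - w)))))).
  { apply (is_derive_scal (Gf w l) t k _). exact HG. }
  pose proof (is_derive_comp atan (fun t => k * Gf w l t) t _ _ Hat HkG) as Hc.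
  pose proof (is_derive_scal _ t (/PI) _ Hc) as Hf.
  eapply is_derive_ext; [intro; reflexivity|].
  replace (gcpc_density w g l t) with
     (/ PI * (/ (1 + (k * Gf w l t)^2) * (k * (sqrt l / (sqrt (l * cos (t - w) ^ 2 + sin (t - w) ^ 2) *
      (sqrt (l * cos (t - w) ^ 2 + sin (t - w) ^ 2) + sqrt l * cos (t - w))))))).
  { change (scal ?a ?b) with (a * b) in Hf. rewrite Rmult_comm, (Rmult_comm (k * _)) in Hf. rewrite Rmult_comm. exact Hf. }
  destruct (basic_pos l (t-w) Hl Hp) as [H1 [H2 H3]].
  unfold gcpc_density, Gf. cbv zeta.
  pose proof (sin2_cos2 (t-w)) as Hsc. unfold Rsqr in Hsc.
  assert (HLL: sqrt l * sqrt l = l) by (apply sqrt_sqrt; lra).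
  assert (HL: 0 < sqrt l) by (apply sqrt_lt_R0; lra).
  assert (Hb: 0 <= cos (t - w) ^ 2 + sin (t - w) ^ 2 / l).
  { assert (0 <= sin (t-w)^2 / l) by (apply Rdiv_le_0_compat; [nra|lra]). nra. }
  assert (HS: sqrt (cos (t - w) ^ 2 + sin (t - w) ^ 2 / l)
     = sqrt (l * cos (t - w) ^ 2 + sin (t - w) ^ 2) / sqrt l).
  { apply (Rmult_eq_reg_l (sqrt l)); [|lra].
    rewrite <- sqrt_mult by lra. field_simplify; [|lra]. f_equal. field. lra. }
  assert (Hbb: cos (t - w) ^ 2 + sin (t - w) ^ 2 / l =
     sqrt (cos (t - w) ^ 2 + sin (t - w) ^ 2 / l) * sqrt (cos (t - w) ^ 2 + sin (t - w) ^ 2 / l)).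
  { rewrite sqrt_sqrt; auto. }
  rewrite HS in Hbb. rewrite HS. rewrite Hbb.
  assert (Hrr: sqrt (l * cos (t - w) ^ 2 + sin (t - w) ^ 2) * sqrt (l * cos (t - w) ^ 2 + sin (t - w) ^ 2)
       = l * cos (t - w) ^ 2 + sin (t - w) ^ 2) by (apply sqrt_sqrt; lra).
  assert (Hq: sqrt (g^2+1) * sqrt (g^2+1) = g*g+1) by (rewrite sqrt_sqrt; nra).
  assert (Hq0: 0 < sqrt (g^2+1)) by (apply sqrt_lt_R0; nra).
  unfold k.
  set (r := sqrt (l * cos (t - w) ^ 2 + sin (t - w) ^ 2)) in *.
  set (L := sqrt l) in *. set (c := cos (t - w)) in *. set (s := sin (t - w)) in *.
  set (q := sqrt (g^2+1)) in *.
  clearbody r L c s q. subst l.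
  apply final_alg; auto.
Qed.

Lemma dens_cont w g l t : 0 < l -> 0 <= g -> -PI < t - w < PI ->
  continuous (gcpc_density w g l) t.
Proof.
  intros Hl Hg Hp. apply (@ex_derive_continuous R_AbsRing R_NormedModule).
  unfold gcpc_density. auto_derive.
  change (t + - w) with (t - w).
  pose proof (sin2_cos2 (t-w)) as Hsc. unfold Rsqr in Hsc.
  pose proof PI_RGT_0 as Hpi.
  assert (HL: 0 < sqrt l) by (apply sqrt_lt_R0; lra).
  set (c := cos (t - w)) in *. set (s := sin (t - w)) in *.
  assert (Hb: 0 < c * (c * 1) + s * (s * 1) * / l).
  { assert (0 < /l) by (apply Rinv_0_lt_compat; lra).
    destruct (Req_dec c 0) as [E|E].
    - rewrite E in *. assert (s*s = 1) by lra. nra.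
    - assert (0 < c*c) by nra. assert (0 <= s*s*/l) by (apply Rmult_le_pos; nra). nra. }
  split; auto. split; auto.
  set (b := c * (c * 1) + s * (s * 1) * / l) in *.
  assert (HS: sqrt b * sqrt b = b) by (apply sqrt_sqrt; lra).
  assert (HS0: 0 < sqrt b) by (apply sqrt_lt_R0; lra).
  assert (Hq: sqrt (g * (g * 1) + 1) * sqrt (g * (g * 1) + 1) = g * g + 1) by (rewrite sqrt_sqrt; nra).
  assert (Hq0: 0 < sqrt (g * (g * 1) + 1)) by (apply sqrt_lt_R0; nra).
  set (q := sqrt (g * (g * 1) + 1)) in *. set (S := sqrt b) in *.
  assert (Hcb: c * c <= b).
  { unfold b. assert (0 <= s*s*/l) by (apply Rmult_le_pos; [nra|left; apply Rinv_0_lt_compat; lra]). nra. }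
  assert (HcS: c <= S) by nra.
  assert (Hqg: g < q) by nra.
  assert (0 < S * q - g * c) by nra.
  assert (0 < b * q + - (g * c * S)) by (rewrite <- HS; nra).
  apply Rgt_not_eq. apply Rmult_gt_0_compat; [|lra]. apply Rmult_gt_0_compat; lra.
Qed.

Theorem mainTheorem5 (omega gamma lambda a b : R) :
  0 < lambda -> 0 <= gamma -> -PI <= omega <= PI ->
  omega - PI < a -> a <= b -> b < omega + PI ->
  is_RInt (gcpc_density omega gamma lambda) a b
    (/ PI *
     (atan ((1 + gcpc_delta gamma) / (1 - gcpc_delta gamma)
            * tan (gcpc_psi omega lambda b / 2))
      - atan ((1 + gcpc_delta gamma) / (1 - gcpc_delta gamma)
            * tan (gcpc_psi omega lambda a / 2)))).
Proof.
  intros Hl Hg Hw Ha Hab Hb.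
  rewrite k_eq by auto.
  rewrite (psi_eq omega lambda b), (psi_eq omega lambda a) by (auto; lra).
  set (F := fun t => / PI * atan ((sqrt (gamma^2+1) + gamma) * Gf omega lambda t)).
  replace (/ PI * (atan ((sqrt (gamma ^ 2 + 1) + gamma) * Gf omega lambda b) -
     atan ((sqrt (gamma ^ 2 + 1) + gamma) * Gf omega lambda a))) with (minus (F b) (F a)).
  2: { unfold F, minus, plus, opp; simpl. ring. }
  apply (@is_RInt_derive R_CompleteNormedModule).
  - intros x Hx. rewrite Rmin_left, Rmax_right in Hx by lra.
    apply derive_F; auto; lra.
  - intros x Hx. rewrite Rmin_left, Rmax_right in Hx by lra.
    apply dens_cont; auto; lra.
Qed.
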